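(* Let $n\geq 3$ be an integer and put $m=2^{n-1}$. Let $G_2(n)=\{0,1,\dots,2^n-1\}$ with the binary operation $\oplus$ and the map $A\colon G_2(n)\to G_2(n)$ defined in the context below. Then $A$ is an automorphism of the groupoid $(G_2(n),\oplus)$, i.e. $A$ is a bijection and $A(i\oplus j)=A(i)\oplus A(j)$ for all $i,j\in G_2(n)$.
   Context: Let $n\ge 3$, $m=2^{n-1}$, $G_2(n)=\{0,1,\dots,2^n-1\}$ (as a set of integers), $P(n)=\{0,1,\dots,m-1\}$ and $H(n)=\{m,m+1,\dots,2^n-1\}$. Let $O_P$, $E_P$ be the odd, resp. even, elements of $P(n)$, and $O_H$, $E_H$ the odd, resp. even, elements of $H(n)$. For $i,j\in G_2(n)$ let $t,s\in P(n)$ be the unique elements with $t\equiv i+j \pmod m$ and $s\equiv i+j+\frac{m}{2}\pmod m$, and define $i\oplus j=t$ if $(i,j)\in (P(n)\times P(n))\cup\big[(H(n)\times H(n))\setminus(E_H\times O_H)\big]$; $i\oplus j=t+m$ if $(i,j)\in (P(n)\times H(n))\cup\big[(H(n)\times P(n))\setminus(E_H\times O_P)\big]$; $i\oplus j=s$ if $(i,j)\in E_H\times O_H$; $i\oplus j=s+m$ if $(i,j)\in E_H\times O_P$. Define $A\colon G_2(n)\to G_2(n)$ by $A(i)=r$ if $i\in O_P$, $A(i)=r+m$ if $i\in O_H$, and $A(i)=i$ otherwise, where $r\in P(n)$ is the unique element with $r\equiv i+\frac{m}{2}\pmod m$. *)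

(* Defs.v *)
From mathcomp Require Import all_boot.
Set Implicit Arguments. Unset Strict Implicit. Unset Printing Implicit Defensive.

(* m = 2^(n-1); elements of G_2(n) are the nats < 2^n.
   P(n) = [0,m), H(n) = [m, 2^n). *)
Definition mG (n : nat) : nat := 2 ^ n.-1.

Definition inP (n i : nat) : bool := i < mG n.
Definition inH (n i : nat) : bool := ~~ inP n i.

Definition opG (n i j : nat) : nat :=
  let m := mG n in
  let t := (i + j) %% m in
  let s := (i + j + m %/ 2) %% m in
  if inP n i && inP n j then t
  else if inH n i && inH n j then
         (if ~~ odd i && odd j then s else t)
  else if inP n i && inH n j then t + m
  else (* i in H, j in P *)
         (if ~~ odd i && odd j then s + m else t + m).

Definition AG (n i : nat) : nat :=
  let m := mG n in
  let r := (i + m %/ 2) %% m in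
  if odd i then (if inP n i then r else r + m) else i.

(* Main.v *)
Require Import Defs.
From mathcomp Require Import all_boot.
From mathcomp Require Import zify.

Lemma setup n : 3 <= n ->
  [/\ mG n = (mG n %/ 2) * 2, odd (mG n %/ 2) = false, 2 ^ n = mG n * 2 & 0 < mG n %/ 2].
Proof.
move=> hn; rewrite /mG.
have [k ->] : exists k, n = k.+3 by exists (n-3); lia.
rewrite [_.+1.-1]/= !expnS mulKn //; split => //; try lia.
all: try by rewrite ?muln_gt0 ?expn_gt0 ?oddM ?oddX.
Qed.

Section S.
Variable n : nat.
Hypothesis hn : 3 <= n.
Let m := mG n.
Let h := m %/ 2.
Let Hm : m = h * 2. Proof. by case: (@setup n hn). Qed.
Let Hh : odd h = false. Proof. by case: (@setup n hn). Qed.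
Let H2 : 2 ^ n = m * 2. Proof. by case: (@setup n hn). Qed.
Let Hh0 : 0 < h. Proof. by case: (@setup n hn). Qed.
Let oddm : odd m = false. Proof. by rewrite Hm oddM andbF. Qed.

Lemma decomp i : i < m * 2 -> i = inH n i * m + i %% m.
Proof.
move=> hi; rewrite /inH /inP -/m; case: ltnP => hl /=.
  by rewrite modn_small.
have -> : i = m + (i - m) by lia.
rewrite modnDl modn_small; lia.
Qed.

Lemma inH_eq b w : w < m -> inH n (nat_of_bool b * m + w) = b.
Proof. rewrite /inH /inP -/m; case: b => /= w0; lia. Qed.

Lemma opG_eq i j : opG n i j =
  (inH n i (+) inH n j) * m + (i + j + h * (inH n i && ~~ odd i && odd j)) %% m.
Proof.
rewrite /opG -/m -/h /inH; case: (inP n i); case: (inP n j) => /=;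
  rewrite ?addn0 ?muln0 ?mul0n ?add0n ?mul1n ?muln1 //;
  case: (~~ odd i && odd j) => /=; rewrite ?muln0 ?muln1 ?addn0 // addnC.
all: reflexivity.
Qed.

Lemma AG_eq i : i < m * 2 -> AG n i = inH n i * m + (i + h * odd i) %% m.
Proof.
move=> hi; rewrite /AG -/m -/h /inH; case: (odd i) => /=.
  by case: (inP n i) => /=; rewrite ?muln1 ?mul1n // addnC.
by rewrite muln0 addn0 {1}(decomp _ hi) /inH.
Qed.

Lemma odd_hx x : odd (h * x) = false.
Proof. by rewrite oddM Hh. Qed.

Lemma AG_props i : i < m * 2 ->
  [/\ AG n i < m * 2, inH n (AG n i) = inH n i, odd (AG n i) = odd i
    & AG n i = i + h * odd i %[mod m]].
Proof.
move=> hi; rewrite AG_eq //.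
have lt : (i + h * odd i) %% m < m by rewrite ltn_mod; lia.
split.
- case: (inH n i) => /=; lia.
- exact: (inH_eq (inH n i) _ lt).
- by rewrite oddD oddM oddm andbF /= odd_mod // oddD odd_hx addbF.
- by rewrite (modnMDl (inH n i)) modn_mod.
Qed.

Lemma AG_inv i : i < m * 2 -> AG n (AG n i) = i.
Proof.
move=> hi; have [lt hH ho hm] := AG_props _ hi.
rewrite (AG_eq _ lt) hH ho -modnDml hm modnDml -addnA -mulnDr addnn.
rewrite [RHS](decomp _ hi); congr (_ + _).
case: (odd i) => /=; first by rewrite -Hm modnDr.
by rewrite muln0 addn0.
Qed.

Lemma hom i j : i < m * 2 -> j < m * 2 ->
  AG n (opG n i j) = opG n (AG n i) (AG n j).
Proof.
move=> hi hj.
have [lti hHi hoi hmi] := AG_props _ hi.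
have [ltj hHj hoj hmj] := AG_props _ hj.
rewrite (opG_eq (AG n i) (AG n j)) hHi hoi hoj hHj (opG_eq i j).
set b := inH n i (+) inH n j.
set c := inH n i && ~~ odd i && odd j.
set w := (i + j + h * c) %% m.
have lw : w < m by rewrite /w ltn_mod Hm muln_gt0 Hh0.
have lX : nat_of_bool b * m + w < m * 2 by move: lw; clear; case: b => /=; lia.
rewrite (AG_eq _ lX) (inH_eq b _ lw); congr (_ + _).
rewrite oddD oddM oddm andbF /= /w odd_mod // !oddD odd_hx addbF.
rewrite -addnA (modnMDl b) modnDml.
rewrite -(modnDml (AG n i + AG n j)) -(modnDm (AG n i) (AG n j)) hmi hmj modnDm modnDml.
clear -Hm; case: (odd i); case: (odd j) => /=; rewrite ?muln0 ?muln1 ?addn0.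
- rewrite (_ : i + h + (j + h) + h * c = (i + j + h * c) + m) ?modnDr //.
  rewrite Hm; lia.
- congr (_ %% _); lia.
- congr (_ %% _); lia.
- by [].
Qed.

End S.

Theorem mainTheorem1 (n : nat) (hn : 3 <= n) :
  (* A maps G_2(n) = {0,...,2^n-1} into itself *)
  (forall i, i < 2 ^ n -> AG n i < 2 ^ n) /\
  (* A is injective on G_2(n) *)
  (forall i j, i < 2 ^ n -> j < 2 ^ n -> AG n i = AG n j -> i = j) /\
  (* A is surjective onto G_2(n) *)
  (forall j, j < 2 ^ n -> exists2 i, i < 2 ^ n & AG n i = j) /\
  (* A is a homomorphism of (G_2(n), ⊕) *)
  (forall i j, i < 2 ^ n -> j < 2 ^ n ->
     AG n (opG n i j) = opG n (AG n i) (AG n j)).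
Proof.
have [_ _ H2 _] := @setup n hn; rewrite H2.
split; first by move=> i hi; case: (AG_props n hn _ hi).
split; first by move=> i j hi hj e; rewrite -(AG_inv n hn _ hi) e (AG_inv n hn _ hj).
split; first by move=> j hj; exists (AG n j); [case: (AG_props n hn _ hj) | exact: (AG_inv n hn _ hj)].
exact: hom n hn.
Qed.
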